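(* Let $\mu_1,\mu_2,\beta>0$, $p>2$, $c_1,c_2>0$ with $c_1+c_2<4^{\frac{p-2}{2p-3}}\big[\frac{p(p-2)^{p-2}}{K_{2p}\mu_0(p-1)^p}\big]^{\frac1{2p-3}}$, $\mu_0=\max\{\mu_1+\beta,\mu_2+\beta\}$. Then $\tilde m:=\inf_{\mathcal A(c_1,c_2)}I>-\infty$.
   Context: $E:=\{u\in H^1(\mathbb{R}^2):\int\log(1+|x|^2)u^2dx<\infty\}$; $S(c):=\{w\in E:\int w^2dx=c\}$. $Q(u)=\int|\nabla u|^2$, $I(u,v)=\frac12(Q(u)+Q(v))+\frac14\iint\log|x-y|(u^2(x)+v^2(x))(u^2(y)+v^2(y))dxdy-\frac1{2p}\big(\mu_1\int|u|^{2p}+\mu_2\int|v|^{2p}+2\beta\int|uv|^p\big)$. $\mathcal A(c_1,c_2)=\{(u,v)\in S(c_1)\times S(c_2):Q(u)+Q(v)<\frac{p-1}{p-2}\frac{(c_1+c_2)^2}4\}$. $K_{2p}$ is the best constant in $\|u\|_{2p}^{2p}\le K_{2p}\|\nabla u\|_2^{2p-2}\|u\|_2^2$ on $H^1(\mathbb{R}^2)$. *)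

(* Defs.v *)
(* R^2 is modelled as R * R with the product
   Lebesgue measure; functions are real-valued (the paper's u, v are real). *)
From mathcomp Require Import all_boot all_algebra all_classical all_reals all_analysis.
Import GRing.Theory Num.Theory numFieldNormedType.Exports.
Local Open Scope classical_set_scope.
Local Open Scope ring_scope.
Local Open Scope ereal_scope.

Section Defs.
Context {R : realType}.

Definition leb2 := ((@lebesgue_measure R) \x (@lebesgue_measure R))%E.
Definition leb4 := (leb2 \x leb2)%E.

Definition e1 : R * R := (1%R, 0%R).
Definition e2 : R * R := (0%R, 1%R).

Definition sqnorm2 (x : R * R) : R := (x.1 ^+ 2 + x.2 ^+ 2)%R.

Definition Dseq (s : seq (R * R)) (f : R * R -> R) : R * R -> R :=
  foldr (fun v g => fun x => 'D_v g x) f s.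

Definition test_fun (phi : R * R -> R) : Prop :=
  (forall (s : seq (R * R)) (x v : R * R), derivable (Dseq s phi) x v) /\
  (forall (s : seq (R * R)) (x : R * R), {for x, continuous (Dseq s phi)}) /\
  (exists r : R, forall x, (r < sqnorm2 x)%R -> phi x = 0%R).

Definition L2 (u : R * R -> R) : Prop :=
  measurable_fun setT u /\ \int[leb2]_x ((u x) ^+ 2)%:E < +oo.

Definition weak_grad (u g1 g2 : R * R -> R) : Prop :=
  forall phi, test_fun phi ->
    \int[leb2]_x (u x * 'D_e1 phi x)%:E = - (\int[leb2]_x (g1 x * phi x)%:E) /\
    \int[leb2]_x (u x * 'D_e2 phi x)%:E = - (\int[leb2]_x (g2 x * phi x)%:E).

Definition H1_with (u g1 g2 : R * R -> R) : Prop :=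
  L2 u /\ L2 g1 /\ L2 g2 /\ weak_grad u g1 g2.

Definition E_with (u g1 g2 : R * R -> R) : Prop :=
  H1_with u g1 g2 /\
  \int[leb2]_x (ln (1 + sqnorm2 x) * (u x) ^+ 2)%:E < +oo.

Definition Qg (g1 g2 : R * R -> R) : \bar R :=
  \int[leb2]_x ((g1 x) ^+ 2 + (g2 x) ^+ 2)%:E.

Definition mass (w : R * R -> R) : \bar R := \int[leb2]_x ((w x) ^+ 2)%:E.

Definition Lq (q : R) (w : R * R -> R) : \bar R :=
  \int[leb2]_x (`|w x| `^ q)%:E.

Definition logdist (x y : R * R) : R :=
  ln (Num.sqrt ((x.1 - y.1) ^+ 2 + (x.2 - y.2) ^+ 2)).

Definition Ifun (mu1 mu2 beta p : R) (u gu1 gu2 v gv1 gv2 : R * R -> R) : \bar R :=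
  (2^-1)%:E * (Qg gu1 gu2 + Qg gv1 gv2)
  + (4^-1)%:E * \int[leb4]_z
      (logdist z.1 z.2 * ((u z.1) ^+ 2 + (v z.1) ^+ 2)
                        * ((u z.2) ^+ 2 + (v z.2) ^+ 2))%:E
  - ((2 * p)^-1)%:E *
      (mu1%:E * Lq (2 * p) u + mu2%:E * Lq (2 * p) v
       + (2 * beta)%:E * \int[leb2]_x (`|u x * v x| `^ p)%:E).

Definition GN_ineq (p K : R) : Prop :=
  forall u g1 g2, H1_with u g1 g2 ->
    Lq (2 * p) u <= (K * (fine (Qg g1 g2)) `^ (p - 1) * fine (mass u))%:E.
Definition best_GN_const (p K : R) : Prop :=
  GN_ineq p K /\ forall K', GN_ineq p K' -> (K <= K')%R.

Definition I_on_A (mu1 mu2 beta p c1 c2 : R) : set \bar R :=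
  [set z | exists u gu1 gu2 v gv1 gv2,
     E_with u gu1 gu2 /\ E_with v gv1 gv2 /\
     mass u = c1%:E /\ mass v = c2%:E /\
     Qg gu1 gu2 + Qg gv1 gv2 <
       ((p - 1) / (p - 2) * (c1 + c2) ^+ 2 / 4)%:E /\
     z = Ifun mu1 mu2 beta p u gu1 gu2 v gv1 gv2].

End Defs.

(* Main.v *)
From HB Require Import structures.
Require Import Defs.
From mathcomp Require Import all_boot all_algebra all_classical all_reals all_analysis.
From mathcomp Require Import measurable_realfun.
From mathcomp Require Import order ring lra.
Import GRing.Theory Num.Theory numFieldNormedType.Exports Order.TTheory.
Local Open Scope ring_scope.

Lemma prod_sigma_finite d1 d2 (T1 : measurableType d1) (T2 : measurableType d2) (R : realType)
  (m1 : {sigma_finite_measure set T1 -> \bar R})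
  (m2 : {sigma_finite_measure set T2 -> \bar R}) : sigma_finite setT (m1 \x m2)%E.
Proof.
have /sigma_finiteP[F [TF ndF Foo]] := sigma_finiteT m1.
have /sigma_finiteP[G [TG ndG Goo]] := sigma_finiteT m2.
exists (fun n => F n `*` G n)%classic.
 rewrite -setXTT TF TG predeqE => -[x y]; split.
    move=> [/= [n _ Fnx] [k _ Gky]]; exists (maxn n k) => //; split.
    - by move: x Fnx; exact/subsetPset/ndF/leq_maxl.
    - by move: y Gky; exact/subsetPset/ndG/leq_maxr.
  by move=> [n _ []/= ? ?]; split; exists n.
move=> k; have [? ?] := Foo k; have [? ?] := Goo k.
split; first exact: measurableX.
by rewrite product_measure1E// lte_mul_pinfty// ge0_fin_numE.
Qed.

HB.instance Definition _ (R : realType) := Measure.on (@leb2 R).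
HB.instance Definition _ (R : realType) :=
  Measure_isSigmaFinite.Build _ _ _ (@leb2 R)
    (@prod_sigma_finite _ _ _ _ R (@lebesgue_measure R) (@lebesgue_measure R)).

Section Aux.
Context {R : realType}.
Local Open Scope classical_set_scope.
Local Open Scope ring_scope.
Local Open Scope ereal_scope.

Lemma le_int_nomeas d (T : measurableType d) (mu : {measure set T -> \bar R})
    (f g : T -> \bar R) :
  (forall x, 0 <= f x) -> (forall x, f x <= g x) ->
  \int[mu]_x f x <= \int[mu]_x g x.
Proof.
move=> f0 fg; have g0 x : 0 <= g x by apply: le_trans (fg x).
rewrite !ge0_integralTE//; apply: ereal_sup_le => _ [h /= hf <-].
by exists h => //= x; exact: le_trans (hf x) (fg x).
Qed.

Definition rr (n : nat) : R := ((2 ^ n)%:R)^-1.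

Lemma rr_gt0 n : (0 < rr n)%R.
Proof. by rewrite /rr invr_gt0 ltr0n expn_gt0. Qed.

Lemma rr_le1 n : (rr n <= 1)%R.
Proof. by rewrite /rr invf_le1 ?ler1n ?expn_gt0 // ltr0n expn_gt0. Qed.

Definition box (c : R * R) (r : R) : set (R * R) :=
  `](c.1 - r)%R, (c.1 + r)%R[%classic `*` `](c.2 - r)%R, (c.2 + r)%R[%classic.

Lemma boxE c r y : box c r y <-> (`|c.1 - y.1| < r /\ `|c.2 - y.2| < r)%R.
Proof. by rewrite /box /= !in_itv /= -!ltr_distlC. Qed.

Lemma box_sym c r y : box c r y <-> box y r c.
Proof. by rewrite !boxE !(distrC c.1) !(distrC c.2). Qed.

Lemma measurable_box c r : measurable (box c r).
Proof. by apply: measurableX; exact: measurable_itv. Qed.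

Lemma leb2X (A B : set R) : measurable A -> measurable B ->
  leb2 (A `*` B) = lebesgue_measure A * lebesgue_measure B.
Proof. by move=> mA mB; rewrite /leb2; exact: product_measure1E. Qed.

Lemma leb2_box c r : (0 < r)%R -> leb2 (box c r) = ((2 * r) * (2 * r))%:E.
Proof.
move=> r0; rewrite /box leb2X ?measurable_itv//.
rewrite !lebesgue_measure_itv /= !lte_fin ifT; last by rewrite ltrD2l gtrN.
rewrite ifT; last by rewrite ltrD2l gtrN.
by rewrite -!EFinB -EFinM; congr (_%:E); ring.
Qed.

Definition Sq (n : nat) : set ((R * R) * (R * R)) := [set z | box z.1 (rr n) z.2].

Lemma indic_Sq1 n x y : (\1_(Sq n) (x, y) : R) = \1_(box x (rr n)) y.
Proof. by rewrite !indicE. Qed.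

Lemma indic_Sq2 n x y : (\1_(Sq n) (x, y) : R) = \1_(box y (rr n)) x.
Proof.
rewrite !indicE; suff -> : ((x, y) \in Sq n) = (x \in box y (rr n)) by [].
by apply/idP/idP; rewrite !inE /Sq /= => /box_sym.
Qed.

Local Notation T2 := (measurableTypeR R * measurableTypeR R)%type.
Local Notation T4 := (T2 * T2)%type.

Lemma mRR d (T : measurableType d) (D : set T) (f : T -> R) :
  measurable_fun (U := measurableTypeR R) D f -> measurable_fun (U := R) D f.
Proof. by []. Qed.

Lemma mf4 : measurable_fun (T := T4) (U := T2) setT fst.
Proof. exact: measurable_fst. Qed.
Lemma ms4 : measurable_fun (T := T4) (U := T2) setT snd.
Proof. exact: measurable_snd. Qed.
Lemma mf2 : measurable_fun (T := T2) (U := measurableTypeR R) setT fst.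
Proof. exact: measurable_fst. Qed.
Lemma ms2 : measurable_fun (T := T2) (U := measurableTypeR R) setT snd.
Proof. exact: measurable_snd. Qed.

Lemma m11 : measurable_fun (T := T4) (U := R) setT (fun z : T4 => z.1.1).
Proof. apply: mRR; exact: (measurableT_comp mf2 mf4). Qed.
Lemma m12 : measurable_fun (T := T4) (U := R) setT (fun z : T4 => z.1.2).
Proof. apply: mRR; exact: (measurableT_comp ms2 mf4). Qed.
Lemma m21 : measurable_fun (T := T4) (U := R) setT (fun z : T4 => z.2.1).
Proof. apply: mRR; exact: (measurableT_comp mf2 ms4). Qed.
Lemma m22 : measurable_fun (T := T4) (U := R) setT (fun z : T4 => z.2.2).
Proof. apply: mRR; exact: (measurableT_comp ms2 ms4). Qed.

Lemma measurable_Sq n : measurable (Sq n : set T4).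
Proof.
have f1 : measurable_fun (T := T4) (U := R) setT (fun z : T4 => `|z.1.1 - z.2.1|)%R.
  exact: (measurableT_comp (@normr_measurable R setT) (measurable_funB m11 m21)).
have f2 : measurable_fun (T := T4) (U := R) setT (fun z : T4 => `|z.1.2 - z.2.2|)%R.
  exact: (measurableT_comp (@normr_measurable R setT) (measurable_funB m12 m22)).
have -> : (Sq n : set T4) = (setT `&` (fun z : T4 => `|z.1.1 - z.2.1|)%R @^-1` `]-oo, rr n[)
   `&` (setT `&` (fun z : T4 => `|z.1.2 - z.2.2|)%R @^-1` `]-oo, rr n[).
  apply/seteqP; split => z; rewrite /Sq /= boxE /= !in_itv /=; [by move=> [? ?] | by move=> [[_ ?] [_ ?]]].
apply: measurableI.
  exact: f1 measurableT _ (measurable_itv _).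
exact: f2 measurableT _ (measurable_itv _).
Qed.

Lemma indic_ge0' (T : Type) (A : set T) (x : T) : (0 <= (\1_A x : R))%R.
Proof. by rewrite indicE ler0n. Qed.

Lemma ln2_le1 : (ln (2:R) <= 1)%R.
Proof. have := expR_ge1Dx (ln (2:R)); rewrite lnK ?posrE//; lra. Qed.

Lemma ln_rr n : ln (rr n) = (- (ln 2 *+ n))%R.
Proof.
rewrite /rr lnV ?posrE ?ltr0n ?expn_gt0// natrX lnXn//.
Qed.

Lemma exists_rr (s : R) : (0 < s)%R -> exists n, (rr n <= s)%R.
Proof.
move=> s0; exists (Num.truncn (s^-1)).+1.
have h1 := truncnS_gt (s^-1).
have h2 : ((Num.truncn (s^-1)).+1%:R <= ((2 ^ (Num.truncn (s^-1)).+1)%:R : R))%R.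
  by rewrite ler_nat ltnW // ltn_expl.
rewrite /rr -div1r ler_pdivrMr ?ltr0n ?expn_gt0//.
have h3 : (s^-1 < ((2 ^ (Num.truncn (s^-1)).+1)%:R : R))%R by apply: lt_le_trans h2.
have h4 : (s * s^-1 = 1)%R by rewrite mulfV // gt_eqF.
set M := ((2 ^ _)%:R : R) in h3 *.
nra.
Qed.

Lemma neg_bound (x y : R * R) (a b : R) : (0 <= a)%R -> (0 <= b)%R ->
  (- (logdist x y * a * b)%:E) <=
  \sum_(n <oo) ((\1_(Sq n) (x, y) : R) * (a ^+ 2 + b ^+ 2))%:E.
Proof.
move=> a0 b0.
have t0 n : 0 <= ((\1_(Sq n) (x, y) : R) * (a ^+ 2 + b ^+ 2))%:E.
  by rewrite lee_fin mulr_ge0 ?indic_ge0' // addr_ge0 // sqr_ge0.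
have S0 : 0 <= \sum_(n <oo) ((\1_(Sq n) (x, y) : R) * (a ^+ 2 + b ^+ 2))%:E.
  by apply: nneseries_ge0 => n _ _; exact: t0.
set s := Num.sqrt ((x.1 - y.1) ^+ 2 + (x.2 - y.2) ^+ 2).
have -> : logdist x y = ln s by [].
have [ls0 | ls0] := leP 0%R (ln s).
  apply: le_trans S0; rewrite leeNl oppe0 lee_fin; by rewrite !mulr_ge0.
have s0 : (0 < s)%R.
  rewrite lt_neqAle sqrtr_ge0 andbT; apply/eqP => s0; move: ls0.
  by rewrite -s0 ln0 // ltxx.
have [N PN Nmin] := ex_minnP (@exists_rr s s0).
have below n : (n < N)%N -> (s < rr n)%R.
  move=> nN; rewrite ltNge; apply/negP => h.
  by have := Nmin n h; rewrite leqNgt nN.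
have d1 : (`|x.1 - y.1| <= s)%R.
  by rewrite -sqrtr_sqr ler_sqrt ?addr_ge0 ?sqr_ge0 // lerDl sqr_ge0.
have d2 : (`|x.2 - y.2| <= s)%R.
  by rewrite -sqrtr_sqr ler_sqrt ?addr_ge0 ?sqr_ge0 // lerDr sqr_ge0.
have inS n : (n < N)%N -> (\1_(Sq n) (x, y) : R) = 1%R.
  move=> nN; rewrite indicE mem_set //= /Sq /= boxE; split.
    exact: le_lt_trans d1 (below _ nN).
  exact: le_lt_trans d2 (below _ nN).
apply: le_trans (nneseries_lim_ge N (fun n _ _ => t0 n)).
rewrite big_mkcond /=.
rewrite (eq_big_nat _ _ (F2 := fun=> (a ^+ 2 + b ^+ 2)%:E)); last first.
  by move=> i /andP[_ iN]; rewrite inS // mul1r.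
rewrite sumEFin sumr_const_nat subn0 lee_fin.
have lnN : (- ln s <= N%:R)%R.
  have : (ln (rr N) <= ln s)%R by rewrite ler_ln ?posrE ?rr_gt0.
  rewrite ln_rr -[(ln 2 *+ N)%R]mulr_natr => h; have h2 := ln2_le1.
  have h3 : (0 <= (N%:R : R))%R by [].
  have h4 : (0 <= (1 - ln 2) * N%:R :> R)%R by rewrite mulr_ge0 // subr_ge0.
  lra.
rewrite -[((a ^+ 2 + b ^+ 2) *+ N)%R]mulr_natr.
have hN : (0 <= (N%:R : R))%R by [].
have hab : (0 <= a * b)%R by rewrite mulr_ge0.
have h5 : (0 <= (N%:R + ln s) * (a * b))%R by rewrite mulr_ge0 // -lerBlDr sub0r.
have h7 : (0 <= a ^+ 2 + b ^+ 2 - a * b)%R by nra.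
have h6 : (0 <= N%:R * (a ^+ 2 + b ^+ 2 - a * b))%R by rewrite mulr_ge0.
nra.
Qed.

End Aux.

Section Aux2.
Context {R : realType}.
Local Open Scope classical_set_scope.
Local Open Scope ring_scope.
Local Open Scope ereal_scope.
Local Notation T2 := (measurableTypeR R * measurableTypeR R)%type.
Local Notation T4 := (T2 * T2)%type.
Lemma int_indic_box (c : R * R) (k r : R) : (0 <= k)%R -> (0 < r)%R ->
  \int[leb2]_y (k * \1_(box c r) y)%:E = (k * ((2 * r) * (2 * r)))%:E.
Proof.
move=> k0 r0.
rewrite (eq_integral (fun y : T2 => k%:E * (\1_(box c r) y)%:E)); last first.
  by move=> y _; rewrite EFinM.
rewrite (@ge0_integralZl_EFin _ _ _ leb2 setT measurableT (fun y => (\1_(box c r) y)%:E));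
  [|by move=> y _; rewrite lee_fin indic_ge0'
   |by apply/measurable_EFinP; apply: measurable_indic; exact: measurable_box
   |by []].
rewrite (@integral_indic _ _ _ leb2 setT measurableT (box c r) (measurable_box c r)).
transitivity (k%:E * leb2 (box c r)); first by rewrite setIT.
by rewrite leb2_box // -EFinM.
Qed.

Lemma int_Sq1 n (w : R * R -> R) :
  measurable_fun (T := T2) (U := R) setT w -> (forall x, (0 <= w x)%R) ->
  \int[leb4]_z ((\1_(Sq n) z : R) * w z.1)%:E =
  \int[leb2]_x (w x)%:E * ((2 * rr n) * (2 * rr n))%:E.
Proof.
move=> mw w0.
rewrite /leb4 fubini_tonelli1 /=; last 2 first.
- apply/measurable_EFinP; apply: measurable_funM.
    exact: measurable_indic (measurable_Sq n).
  exact: measurableT_comp mw mf4.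
- by move=> z; rewrite lee_fin mulr_ge0 ?indic_ge0'.
rewrite /fubini_F.
rewrite -ge0_integralZr //; last 3 first.
- by apply/measurable_EFinP.
- by move=> x _; rewrite lee_fin.
- by rewrite lee_fin mulr_ge0 // mulr_ge0 // ltW // ?mulr_gt0 // rr_gt0.
apply: eq_integral => x _.
under eq_integral => y _ do rewrite indic_Sq1 /= mulrC.
by rewrite int_indic_box // ?rr_gt0 // EFinM.
Qed.

Lemma int_Sq2 n (w : R * R -> R) :
  measurable_fun (T := T2) (U := R) setT w -> (forall x, (0 <= w x)%R) ->
  \int[leb4]_z ((\1_(Sq n) z : R) * w z.2)%:E =
  \int[leb2]_x (w x)%:E * ((2 * rr n) * (2 * rr n))%:E.
Proof.
move=> mw w0.
rewrite /leb4 fubini_tonelli2 /=; last 2 first.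
- apply/measurable_EFinP; apply: measurable_funM.
    exact: measurable_indic (measurable_Sq n).
  exact: measurableT_comp mw ms4.
- by move=> z; rewrite lee_fin mulr_ge0 ?indic_ge0'.
rewrite /fubini_G.
rewrite -ge0_integralZr //; last 3 first.
- by apply/measurable_EFinP.
- by move=> x _; rewrite lee_fin.
- by rewrite lee_fin mulr_ge0 // mulr_ge0 // ltW // ?mulr_gt0 // rr_gt0.
apply: eq_integral => y _.
under eq_integral => x _ do rewrite indic_Sq2 /= mulrC.
by rewrite int_indic_box // ?rr_gt0 // EFinM.
Qed.

Lemma geom_sum (r : R) : \sum_(k <oo) (r / (2 ^ (k + 1))%:R)%:E = r%:E.
Proof.
have h := @cvg_geometric_eseries_half R r 0.
rewrite expr0 divr1 in h.
by apply: cvg_lim h.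
Qed.

Lemma logterm_lb (u v : R * R -> R) (P : R) :
  measurable_fun (T := T2) (U := R) setT u -> measurable_fun (T := T2) (U := R) setT v ->
  \int[leb2]_x (((u x ^+ 2 + v x ^+ 2) ^+ 2)%:E) = P%:E ->
  (- (16 * P))%:E <= \int[leb4]_z (logdist z.1 z.2 * (u z.1 ^+ 2 + v z.1 ^+ 2)
                        * (u z.2 ^+ 2 + v z.2 ^+ 2))%:E.
Proof.
move=> mu mv hP.
pose rho x := (u x ^+ 2 + v x ^+ 2)%R.
have rho0 x : (0 <= rho x)%R by rewrite addr_ge0 // sqr_ge0.
have mrho : measurable_fun (T := T2) (U := R) setT rho.
  by apply: measurable_funD; apply: measurable_funX.
have mw : measurable_fun (T := T2) (U := R) setT (fun x => rho x ^+ 2)%R.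
  exact: measurable_funX.
have w0 x : (0 <= rho x ^+ 2)%R by rewrite sqr_ge0.
have P0 : (0 <= P)%R.
  by rewrite -lee_fin -hP; apply: integral_ge0 => x _; rewrite lee_fin sqr_ge0.
pose g n (z : T4) := ((\1_(Sq n) z : R) * (rho z.1 ^+ 2 + rho z.2 ^+ 2))%:E.
have g0 n z : 0 <= g n z by rewrite lee_fin mulr_ge0 ?indic_ge0' // addr_ge0.
have mg n : measurable_fun setT (g n).
  apply/measurable_EFinP; apply: measurable_funM.
    exact: measurable_indic (measurable_Sq n).
  apply: measurable_funD.
    exact: measurableT_comp mw mf4.
  exact: measurableT_comp mw ms4.
have intg n : \int[leb4]_z g n z = (P * ((2 * rr n) * (2 * rr n)) + P * ((2 * rr n) * (2 * rr n)))%:E.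
  rewrite /g (eq_integral (fun z : T4 => ((\1_(Sq n) z : R) * rho z.1 ^+ 2)%:E
                                + ((\1_(Sq n) z : R) * rho z.2 ^+ 2)%:E)); last first.
    by move=> z _; rewrite -EFinD mulrDr.
  rewrite ge0_integralD //; last 4 first.
  - by move=> z _; rewrite lee_fin mulr_ge0 ?indic_ge0'.
  - apply/measurable_EFinP; apply: measurable_funM.
      exact: measurable_indic (measurable_Sq n).
    exact: measurableT_comp mw mf4.
  - by move=> z _; rewrite lee_fin mulr_ge0 ?indic_ge0'.
  - apply/measurable_EFinP; apply: measurable_funM.
      exact: measurable_indic (measurable_Sq n).
    exact: measurableT_comp mw ms4.
  rewrite (int_Sq1 n _ mw w0) (int_Sq2 n _ mw w0).
  by rewrite /rho hP -!EFinM -EFinD.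
rewrite integralE.
have pos : 0 <= \int[leb4]_z ((fun z : T4 => (logdist z.1 z.2 * (u z.1 ^+ 2 + v z.1 ^+ 2)
                        * (u z.2 ^+ 2 + v z.2 ^+ 2))%:E)^\+ z).
  by apply: integral_ge0 => z _; exact: funepos_ge0.
suff neg : \int[leb4]_z ((fun z : T4 => (logdist z.1 z.2 * (u z.1 ^+ 2 + v z.1 ^+ 2)
                        * (u z.2 ^+ 2 + v z.2 ^+ 2))%:E)^\- z) <= (16 * P)%:E.
  by rewrite EFinN -sub0e; exact: leeB.
apply: (le_trans (@le_int_nomeas R _ _ leb4 _ (fun z => \sum_(n <oo) g n z) _ _)).
- by move=> z; exact: funeneg_ge0.
- case=> x y; rewrite funenegE ge_max /g /=; apply/andP; split.
    by rewrite EFinN; exact: (neg_bound x y _ _ (rho0 x) (rho0 y)).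
  by apply: nneseries_ge0 => n _ _; exact: g0.
rewrite integral_nneseries //; try by move=> n z _; exact: g0.
under eq_eseriesr do rewrite intg.
apply: le_trans (lee_nneseries (v := fun k => ((16 * P) / (2 ^ (k + 1))%:R)%:E) _ _) _.
- by move=> i _ _; rewrite lee_fin addr_ge0 // mulr_ge0 // mulr_ge0 // mulr_ge0 // ltW // rr_gt0.
- move=> k _; rewrite lee_fin.
  have r0 := @rr_gt0 R k; have r1 := @rr_le1 R k.
  have -> : ((16 * P) / (2 ^ (k + 1))%:R = 8 * P * rr k)%R.
    by rewrite /rr addn1 expnS natrM invfM; field.
  have h : (0 <= P * rr k * (1 - rr k))%R.
    by apply: mulr_ge0; [exact: (mulr_ge0 P0 (ltW r0)) | rewrite subr_ge0].
  nra.
by rewrite geom_sum.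
Qed.

End Aux2.

Section Aux3.
Context {R : realType}.
Local Open Scope classical_set_scope.
Local Open Scope ring_scope.
Local Open Scope ereal_scope.
Local Notation T2 := (measurableTypeR R * measurableTypeR R)%type.

Lemma pow4_bound (a p : R) : (2 < p)%R ->
  ((a ^+ 2) ^+ 2 <= a ^+ 2 + `|a| `^ (2 * p))%R.
Proof.
move=> p2; have pw0 := powR_ge0 `|a| (2 * p).
have [a1|a1] := leP (`|a|)%R 1%R.
  have : (a ^+ 2 <= 1)%R.
    by rewrite -(real_normK (num_real a)); apply: exprn_ile1.
  have := sqr_ge0 a; nra.
have e : (`|a| ^+ 4 = (a ^+ 2) ^+ 2)%R.
  by rewrite (_ : 4%N = (2 * 2)%N) // exprM real_normK ?num_real.
have : (`|a| `^ 4%:R <= `|a| `^ (2 * p))%R.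
  by apply: ler_powR; [exact: ltW | lra].
rewrite powR_mulrn // e; have := sqr_ge0 a; lra.
Qed.

Lemma mpow (u : R * R -> R) (q : R) : measurable_fun (T := T2) (U := R) setT u ->
  measurable_fun (T := T2) (U := R) setT (fun x => `|u x| `^ q)%R.
Proof.
move=> mu; apply: (measurableT_comp (measurable_powR q)).
exact: (measurableT_comp (@normr_measurable R setT) mu).
Qed.

Lemma int_sum2 (f g : R * R -> R) :
  measurable_fun (T := T2) (U := R) setT f -> measurable_fun (T := T2) (U := R) setT g ->
  (forall x, 0 <= f x)%R -> (forall x, 0 <= g x)%R ->
  \int[leb2]_x ((f x + g x)%:E) = \int[leb2]_x (f x)%:E + \int[leb2]_x (g x)%:E.
Proof.
move=> mf mg f0 g0.
rewrite (eq_integral (fun x : T2 => (f x)%:E + (g x)%:E)); last by move=> x _; rewrite EFinD.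
rewrite ge0_integralD //.
- by move=> x _; rewrite lee_fin.
- exact/measurable_EFinP.
- by move=> x _; rewrite lee_fin.
- exact/measurable_EFinP.
Qed.

Lemma int_scale (k : R) (f : R * R -> R) : (0 <= k)%R ->
  measurable_fun (T := T2) (U := R) setT f -> (forall x, 0 <= f x)%R ->
  \int[leb2]_x ((k * f x)%:E) = k%:E * \int[leb2]_x (f x)%:E.
Proof.
move=> k0 mf f0.
rewrite (eq_integral (fun x : T2 => k%:E * (f x)%:E)); last by move=> x _; rewrite EFinM.
rewrite ge0_integralZl_EFin //.
- by move=> x _; rewrite lee_fin.
- exact/measurable_EFinP.
Qed.

Lemma rho2_bound (u v : R * R -> R) (p : R) : (2 < p)%R ->
  measurable_fun (T := T2) (U := R) setT u -> measurable_fun (T := T2) (U := R) setT v ->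
  \int[leb2]_x (((u x ^+ 2 + v x ^+ 2) ^+ 2)%:E) <=
  2%:E * (mass u + Lq (2 * p) u) + 2%:E * (mass v + Lq (2 * p) v).
Proof.
move=> p2 mu mv.
have pw0 (a : R) q : (0 <= `|a| `^ q)%R by exact: powR_ge0.
have mu2 : measurable_fun (T := T2) (U := R) setT (fun x => u x ^+ 2)%R by exact: measurable_funX.
have mv2 : measurable_fun (T := T2) (U := R) setT (fun x => v x ^+ 2)%R by exact: measurable_funX.
have mpu := mpow _ (2 * p)%R mu; have mpv := mpow _ (2 * p)%R mv.
apply: le_trans (@le_int_nomeas R _ _ leb2 _
  (fun x => ((2 * (u x ^+ 2 + `|u x| `^ (2 * p))) + (2 * (v x ^+ 2 + `|v x| `^ (2 * p))))%:E) _ _) _.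
- by move=> x; rewrite lee_fin sqr_ge0.
- move=> x; rewrite lee_fin.
  have := pow4_bound (u x) p p2; have := pow4_bound (v x) p p2.
  have := sqr_ge0 (u x ^+ 2 - v x ^+ 2); lra.
rewrite int_sum2; last 4 first.
- by apply: measurable_funM => //; apply: measurable_funD.
- by apply: measurable_funM => //; apply: measurable_funD.
- by move=> x; rewrite mulr_ge0 // addr_ge0 // sqr_ge0.
- by move=> x; rewrite mulr_ge0 // addr_ge0 // sqr_ge0.
rewrite !int_scale //; last 4 first.
- by apply: measurable_funD.
- by move=> x; rewrite addr_ge0 // sqr_ge0.
- by apply: measurable_funD.
- by move=> x; rewrite addr_ge0 // sqr_ge0.
rewrite !int_sum2 //; try by move=> x; rewrite sqr_ge0.
Qed.

Lemma uv_bound (u v : R * R -> R) (p : R) : (2 < p)%R ->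
  measurable_fun (T := T2) (U := R) setT u -> measurable_fun (T := T2) (U := R) setT v ->
  \int[leb2]_x ((`|u x * v x| `^ p)%:E) <= Lq (2 * p) u + Lq (2 * p) v.
Proof.
move=> p2 mu mv.
have mpu := mpow _ (2 * p)%R mu; have mpv := mpow _ (2 * p)%R mv.
apply: le_trans (@le_int_nomeas R _ _ leb2 _
  (fun x => (`|u x| `^ (2 * p) + `|v x| `^ (2 * p))%:E) _ _) _.
- by move=> x; rewrite lee_fin powR_ge0.
- move=> x; rewrite lee_fin normrM powRM //.
  have hu : (`|u x| `^ (2 * p) = (`|u x| `^ p) ^+ 2)%R.
    by rewrite mulrC powRrM powR_mulrn ?powR_ge0.
  have hv : (`|v x| `^ (2 * p) = (`|v x| `^ p) ^+ 2)%R.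
    by rewrite mulrC powRrM powR_mulrn ?powR_ge0.
  rewrite hu hv.
  have := powR_ge0 (`|u x|)%R p; have := powR_ge0 (`|v x|)%R p.
  set A := (`|u x| `^ p)%R; set B := (`|v x| `^ p)%R.
  have := sqr_ge0 (A - B); nra.
by rewrite int_sum2 // => x; rewrite powR_ge0.
Qed.

End Aux3.

Section Aux4.
Context {R : realType}.
Local Open Scope classical_set_scope.
Local Open Scope ring_scope.
Local Open Scope ereal_scope.
Local Notation T2 := (measurableTypeR R * measurableTypeR R)%type.

Lemma Qg_ge0 (g1 g2 : R * R -> R) : 0 <= Qg g1 g2.
Proof. by apply: integral_ge0 => x _; rewrite lee_fin addr_ge0 // sqr_ge0. Qed.

Lemma Lq_ge0 q (w : R * R -> R) : 0 <= Lq q w.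
Proof. by apply: integral_ge0 => x _; rewrite lee_fin powR_ge0. Qed.

Lemma GN_bound (p K c Qm : R) (u g1 g2 : R * R -> R) :
  (2 < p)%R -> (0 <= c)%R -> GN_ineq p K -> H1_with u g1 g2 -> mass u = c%:E ->
  Qg g1 g2 <= Qm%:E ->
  Lq (2 * p) u <= (`|K| * Qm `^ (p - 1) * c)%:E.
Proof.
move=> p2 c0 GN H1 mu hQ.
apply: le_trans (GN _ _ _ H1) _.
rewrite mu /= lee_fin.
have Q0 := Qg_ge0 g1 g2.
have fQ : (0 <= fine (Qg g1 g2))%R by exact: fine_ge0.
have fQm : (fine (Qg g1 g2) <= Qm)%R.
  have fin : Qg g1 g2 \is a fin_num.
    by rewrite ge0_fin_numE //; apply: le_lt_trans hQ _; exact: ltry.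
  by move: hQ; rewrite -(fineK fin) lee_fin.
have Qm0 : (0 <= Qm)%R by apply: le_trans fQ fQm.
have t0 : (0 <= fine (Qg g1 g2) `^ (p - 1) * c)%R by rewrite mulr_ge0 // powR_ge0.
have tt : (fine (Qg g1 g2) `^ (p - 1) * c <= Qm `^ (p - 1) * c)%R.
  apply: ler_wpM2r => //; apply: ge0_ler_powR => //; rewrite ?nnegrE //; lra.
rewrite -!mulrA.
apply: le_trans (_ : `|K| * (fine (Qg g1 g2) `^ (p - 1) * c) <= _)%R.
  apply: le_trans (ler_norm _) _; rewrite normrM (ger0_norm t0) //.
by apply: ler_wpM2l.
Qed.

End Aux4.

Theorem lemma5p1 (R : realType) (mu1 mu2 beta p c1 c2 K : R) :
  0 < mu1 -> 0 < mu2 -> 0 < beta -> 2 < p ->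
  0 < c1 -> 0 < c2 ->
  best_GN_const p K ->
  let mu0 := Num.max (mu1 + beta) (mu2 + beta) in
  c1 + c2 <
     4 `^ ((p - 2) / (2 * p - 3)) *
     (p * (p - 2) `^ (p - 2) / (K * mu0 * (p - 1) `^ p)) `^ (1 / (2 * p - 3)) ->
  (-oo < ereal_inf (I_on_A mu1 mu2 beta p c1 c2))%E.
Proof.
move=> m10 m20 b0 p2 c10 c20 [GN _] mu0 _.
set Qm := ((p - 1) / (p - 2) * (c1 + c2) ^+ 2 / 4).
set Gu := `|K| * Qm `^ (p - 1) * c1.
set Gv := `|K| * Qm `^ (p - 1) * c2.
have Gu0 : 0 <= Gu by rewrite /Gu !mulr_ge0 // ?powR_ge0 // ltW.
have Gv0 : 0 <= Gv by rewrite /Gv !mulr_ge0 // ?powR_ge0 // ltW.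
set X := c1 + Gu + c2 + Gv.
set Cb := (2 * p)^-1 * (mu1 * Gu + mu2 * Gv + 2 * beta * (Gu + Gv)).
apply: (lt_le_trans (ltNyr (- (8 * X) - Cb))).
apply: le_ereal_inf_tmp => _ [u [gu1 [gu2 [v [gv1 [gv2 [Eu [Ev [mu_ [mv_ [hQ ->]]]]]]]]]]].
have mu : measurable_fun (T := (measurableTypeR R * measurableTypeR R)%type) (U := R) setT u.
  by case: Eu => [[[m _] _] _].
have mv : measurable_fun (T := (measurableTypeR R * measurableTypeR R)%type) (U := R) setT v.
  by case: Ev => [[[m _] _] _].
have Qu0 := Qg_ge0 gu1 gu2; have Qv0 := Qg_ge0 gv1 gv2.
have hQu : (Qg gu1 gu2 <= Qm%:E)%E.
  by apply: le_trans (ltW hQ); rewrite leeDl.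
have hQv : (Qg gv1 gv2 <= Qm%:E)%E.
  by apply: le_trans (ltW hQ); rewrite leeDr.
have Lu := @GN_bound R p K c1 Qm u gu1 gu2 p2 (ltW c10) GN Eu.1 mu_ hQu.
have Lv := @GN_bound R p K c2 Qm v gv1 gv2 p2 (ltW c20) GN Ev.1 mv_ hQv.
have Lu0 := Lq_ge0 (2 * p) u; have Lv0 := Lq_ge0 (2 * p) v.
have Luv := uv_bound u v p p2 mu mv.
have hP := rho2_bound u v p p2 mu mv.
rewrite mu_ mv_ in hP.
have hP2 : (\int[leb2]_x (((u x ^+ 2 + v x ^+ 2) ^+ 2)%:E) <= (2 * X)%:E)%E.
  apply: le_trans hP _.
  rewrite /X (_ : (2 * (c1 + Gu + c2 + Gv)) = 2 * (c1 + Gu) + 2 * (c2 + Gv)); last by ring.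
  rewrite [X in (_ <= X)%E]EFinD 2!EFinM (EFinD c1) (EFinD c2).
  by apply: leeD; (apply: lee_wpmul2l; [rewrite lee_fin | apply: leeD]).
have P0 : (0 <= \int[leb2]_x (((u x ^+ 2 + v x ^+ 2) ^+ 2)%:E))%E.
  by apply: integral_ge0 => x _; rewrite lee_fin sqr_ge0.
have Pfin : (\int[leb2]_x (((u x ^+ 2 + v x ^+ 2) ^+ 2)%:E))%E \is a fin_num.
  by rewrite ge0_fin_numE //; apply: le_lt_trans hP2 _; exact: ltry.
set P := fine (\int[leb2]_x (((u x ^+ 2 + v x ^+ 2) ^+ 2)%:E))%E.
have eP : (\int[leb2]_x (((u x ^+ 2 + v x ^+ 2) ^+ 2)%:E))%E = P%:E by rewrite fineK.
have PX : P <= 2 * X by rewrite -lee_fin -eP.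
have hL := logterm_lb u v P mu mv eP.
rewrite /Ifun.
have hA : (0 <= (2^-1)%:E * (Qg gu1 gu2 + Qg gv1 gv2))%E.
  by apply: mule_ge0; [rewrite lee_fin | exact: adde_ge0].
have hB : ((- (8 * X))%:E <= (4^-1)%:E * \int[leb4]_z (logdist z.1 z.2 * (u z.1 ^+ 2 + v z.1 ^+ 2)
                        * (u z.2 ^+ 2 + v z.2 ^+ 2))%:E)%E.
  apply: le_trans (lee_wpmul2l _ hL); last by rewrite lee_fin.
  rewrite -EFinM lee_fin; lra.
have hC : (((2 * p)^-1)%:E * (mu1%:E * Lq (2 * p) u + mu2%:E * Lq (2 * p) v
       + (2 * beta)%:E * \int[leb2]_x (`|u x * v x| `^ p)%:E) <= Cb%:E)%E.
  rewrite /Cb [X in (_ <= X)%E]EFinM; apply: lee_wpmul2l.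
    by rewrite lee_fin invr_ge0; lra.
  rewrite [X in (_ <= X)%E]EFinD [X in (_ <= X + _)%E]EFinD.
  apply: leeD; first apply: leeD.
  - by rewrite [X in (_ <= X)%E]EFinM; apply: lee_wpmul2l => //; rewrite lee_fin ltW.
  - by rewrite [X in (_ <= X)%E]EFinM; apply: lee_wpmul2l => //; rewrite lee_fin ltW.
  - rewrite [X in (_ <= X)%E]EFinM; apply: lee_wpmul2l; first by rewrite lee_fin; lra.
    by apply: le_trans Luv _; rewrite EFinD; apply: leeD.
apply: le_trans (leeB (leeD hA hB) hC).
by rewrite add0e -EFinB.
Qed.
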